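(* Fix $\hat\Sigma\in\mathbb{P}_d$ and $\alpha>0$. Define $\mathcal{B}_R(\hat\Sigma;\alpha)=\{A\in\mathbb{P}_d:\delta_R(A,\hat\Sigma)\le\alpha\}$ and, for $\rho>0$, $\mathcal{B}_S(\hat\Sigma;\rho)=\{A\in\mathbb{P}_d:\delta_S^2(A,\hat\Sigma)\le\rho\}$. Then $\mathcal{B}_R(\hat\Sigma;\alpha)\subseteq\mathcal{B}_S(\hat\Sigma;C\alpha)$ for every $C\ge\alpha/8$.
   Context: $\mathbb{P}_d$ denotes the set of real symmetric $d\times d$ positive definite matrices. The Riemannian distance is $\delta_R(A,B)=\|\log(A^{-1/2}BA^{-1/2})\|_F$ (matrix logarithm, Frobenius norm). The S-divergence is $\delta_S^2(A,B)=\log\det\left(\frac{A+B}{2}\right)-\frac12\log\det(AB)$, and $\delta_S=\sqrt{\delta_S^2}$. *)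

(* Defs.v *)
From HB Require Import structures.
From mathcomp Require Import all_boot all_order all_algebra.
From mathcomp Require Import boolp classical_sets reals exp.
Set Implicit Arguments. Unset Strict Implicit. Unset Printing Implicit Defensive.
Import Order.TTheory GRing.Theory Num.Theory.
Local Open Scope ring_scope.

Section SPD.
Variables (R : realType) (d : nat).

Definition symmetric (A : 'M[R]_d) : Prop := A^T = A.

Definition posdef (A : 'M[R]_d) : Prop :=
  symmetric A /\ forall x : 'rV[R]_d, x != 0 -> 0 < (x *m A *m x^T) 0 0.

Definition orthogonal (U : 'M[R]_d) : Prop := U *m U^T = 1%:M.

Definition spec_dec (A : 'M[R]_d) (p : 'M[R]_d * 'rV[R]_d) : Prop :=
  orthogonal p.1 /\ A = p.1^T *m diag_mx p.2 *m p.1.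

(* primary matrix function f(A) of a symmetric matrix via its spectral
   decomposition (0 if A has none, which does not happen for symmetric A) *)
Definition mfun (f : R -> R) (A : 'M[R]_d) : 'M[R]_d :=
  match pselect (exists p, spec_dec A p) with
  | left h => let p := projT1 (cid h) in
              p.1^T *m diag_mx (map_mx f p.2) *m p.1
  | right _ => 0
  end.

Definition msqrt (A : 'M[R]_d) : 'M[R]_d := mfun Num.sqrt A.
Definition minvsqrt (A : 'M[R]_d) : 'M[R]_d := invmx (msqrt A).
Definition mlog (A : 'M[R]_d) : 'M[R]_d := mfun (@ln R) A.

Definition frob (M : 'M[R]_d) : R := Num.sqrt (\sum_i \sum_j M i j ^+ 2).

Definition deltaR (A B : 'M[R]_d) : R :=
  frob (mlog (minvsqrt A *m B *m minvsqrt A)).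

Definition deltaS2 (A B : 'M[R]_d) : R :=
  @ln R (\det ((2%:R)^-1 *: (A + B))) - (2%:R)^-1 * @ln R (\det (A *m B)).

Definition ballR (S : 'M[R]_d) (alpha : R) : set 'M[R]_d :=
  [set A | posdef A /\ deltaR A S <= alpha].

Definition ballS (S : 'M[R]_d) (rho : R) : set 'M[R]_d :=
  [set A | posdef A /\ deltaS2 A S <= rho].

End SPD.

(* Main.v *)
Require Import Defs.
From HB Require Import structures.
From mathcomp Require Import all_boot all_order all_algebra.
From mathcomp Require Import boolp classical_sets reals exp.
From mathcomp Require Import functions topology normedtype derive realfun.
From mathcomp Require Import sesquilinear spectral.
From mathcomp Require Import complex.
From mathcomp Require Import ring lra.
Set Implicit Arguments. Unset Strict Implicit. Unset Printing Implicit Defensive.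
Import Order.TTheory GRing.Theory Num.Theory.
Import numFieldNormedType.Exports.
Local Open Scope ring_scope.
Local Open Scope classical_set_scope.

Section Scalar.
Variable R : realType.
Definition Gf : R -> R := (cst 1 + id) * (@ln R) - cst 2 * (id - cst 1).
Lemma GfE w : Gf w = (1 + w) * ln w - 2 * (w - 1). Proof. by []. Qed.
Lemma dGf (x : R) : 0 < x -> is_derive x (1:R) Gf (ln x + (1 + x) / x - 2).
Proof.
move=> x0.
apply: is_derive_eq.
apply: is_deriveB. apply: is_deriveM. apply: is_derive1_ln x0.
rewrite /= !subr0 add0r !scaler0 addr0 !scaler1.
change ((1 + x) * x^-1 + ln x - 2 = ln x + (1 + x) / x - 2). lra.
Qed.

Lemma ln_ge1V (x : R) : 0 < x -> 1 - x^-1 <= ln x.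
Proof.
move=> x0.
have e : 1 + (x^-1 - 1) = x^-1 by ring.
have := @le_ln1Dx R (x^-1 - 1); rewrite e => h.
have : ln x^-1 <= x^-1 - 1 by apply: h; rewrite ltrBrDl subrr invr_gt0.
rewrite lnV ?posrE //; lra.
Qed.

Lemma dGf_ge0 (x : R) : 0 < x -> 0 <= ln x + (1 + x) / x - 2.
Proof.
move=> x0; have := ln_ge1V x0.
have -> : (1 + x) / x = x^-1 + 1 by rewrite mulrDl mul1r divff // gt_eqF.
lra.
Qed.

Lemma Gf1 : Gf 1 = 0. Proof. by rewrite GfE ln1 mulr0 subrr mulr0 subrr. Qed.

Lemma Gf_mono (a b : R) : 0 < a -> a <= b -> Gf a <= Gf b.
Proof.
move=> a0 ab.
apply: (@ger0_derive1_ndecr _ Gf a b) => //.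
- move=> x; rewrite in_itv /= => /andP[ax _].
  have x0 : 0 < x by apply: lt_trans a0 ax.
  exact: (@ex_derive _ _ _ _ _ _ _ (dGf x0)).
- move=> x; rewrite in_itv /= => /andP[ax _].
  have x0 : 0 < x by apply: lt_trans a0 ax.
  rewrite derive1E (@derive_val _ _ _ _ _ _ _ (dGf x0)); exact: dGf_ge0.
- apply: derivable_within_continuous => x; rewrite in_itv /= => /andP[ax _].
  have x0 : 0 < x by apply: lt_le_trans a0 ax.
  exact: (@ex_derive _ _ _ _ _ _ _ (dGf x0)).
Qed.

Definition Ff : R -> R := cst (8^-1) * ((@ln R) * (@ln R)) - ((@ln R) \o (cst 1 + id))
   + cst (2^-1) * (@ln R) + cst (ln 2).
Lemma FfE w : Ff w = 8^-1 * (ln w * ln w) - ln (1 + w) + 2^-1 * ln w + ln 2.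
Proof. by []. Qed.

Lemma dFf (x : R) : 0 < x -> is_derive x (1:R) Ff (Gf x / (4 * x * (1 + x))).
Proof.
move=> x0.
have x1 : 0 < 1 + x by lra.
apply: is_derive_eq.
apply: is_deriveD. apply: is_deriveD. apply: is_deriveB.
apply: is_deriveM. apply: is_deriveM. apply: is_derive1_ln x0. apply: is_derive1_ln x0.
apply: is_derive1_comp. apply: is_derive1_ln. exact: x1.
apply: is_deriveM. apply: is_derive1_ln x0.
rewrite /= !scaler0 !addr0 add0r GfE.
change (8^-1 * (ln x * x^-1 + ln x * x^-1) - (1 + x)^-1 * 1 + 2^-1 * x^-1
  = ((1 + x) * ln x - 2 * (x - 1)) / (4 * x * (1 + x))).
field. by rewrite !gt_eqF.
Qed.

Lemma Ff1 : Ff 1 = 0.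
Proof. rewrite FfE ln1; lra. Qed.

Lemma Ff_ge0 (w : R) : 0 < w -> 0 <= Ff w.
Proof.
move=> w0; rewrite -Ff1.
have dF (x : R) : 0 < x -> derivable Ff x 1 by move=> x0; exact: (@ex_derive _ _ _ _ _ _ _ (dFf x0)).
have pos (x : R) : 0 < x -> 0 < 4 * x * (1 + x).
  move=> x0; apply: mulr_gt0; [apply: mulr_gt0 => // | lra].
have [w1|w1] := leP 1 w.
- apply: (@ger0_derive1_ndecr _ Ff 1 w) => //.
  + move=> x; rewrite in_itv /= => /andP[ax _]; apply: dF; lra.
  + move=> x; rewrite in_itv /= => /andP[ax _].
    have x0 : 0 < x by lra.
    rewrite derive1E (@derive_val _ _ _ _ _ _ _ (dFf x0)).
    apply: divr_ge0; last exact/ltW/pos.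
    rewrite -Gf1; apply: Gf_mono => //; exact: ltW.
  + apply: derivable_within_continuous => x; rewrite in_itv /= => /andP[ax _].
    apply: dF; lra.
- apply: (@ler0_derive1_nincr _ Ff w 1) => //; last exact: ltW.
  + move=> x; rewrite in_itv /= => /andP[ax _]; apply: dF; lra.
  + move=> x; rewrite in_itv /= => /andP[ax xb].
    have x0 : 0 < x by lra.
    rewrite derive1E (@derive_val _ _ _ _ _ _ _ (dFf x0)).
    apply: mulr_le0_ge0; last by rewrite invr_ge0; exact/ltW/pos.
    rewrite -Gf1; apply: Gf_mono => //; exact: ltW.
  + apply: derivable_within_continuous => x; rewrite in_itv /= => /andP[ax _].
    apply: dF; lra.
Qed.

Lemma key_scalar (w : R) : 0 < w ->
  ln ((1 + w) / 2) - 2^-1 * ln w <= 8^-1 * (ln w ^+ 2).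
Proof.
move=> w0; have := Ff_ge0 w0; rewrite FfE ln_div ?posrE; try lra.
Qed.
End Scalar.

Section Eig.
Variable R : realType.

Lemma real_eig n (A : 'M[R]_n.+1) : A^T = A -> exists r : R, \det (A - r%:M) = 0.
Proof.
move=> Asym.
pose f := real_complex R.
pose Ac := map_mx f A.
have hAc : Ac \is hermsymmx.
  apply: realsym_hermsym.
    apply/is_hermitianmxP; rewrite expr0 scale1r.
    by apply/matrixP => i j; rewrite !mxE /= -{1}Asym mxE.
  apply/'forall_forallP => i j; rewrite mxE /f.
  rewrite realE; case: (lerP 0 (A i j)) => h.
    by rewrite ler0c h.
  by rewrite orbC -oppr_ge0 -rmorphN ler0c oppr_ge0 ltW.
have nAc := hermitian_normalmx hAc.
have eAc := orthomx_spectralP nAc.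
have rd := hermitian_spectral_diag_real hAc.
set P := spectralmx Ac in eAc.
set d := spectral_diag Ac in eAc rd.
pose z := d 0 ord0.
have zr : z \is Num.real by apply: (mxOverP rd).
have zE : z = (complex.Re z)%:C%C.
  have Im0 : complex.Im z = 0.
    move: zr; rewrite realE => /orP[/ger0_Im //|].
    rewrite -oppr_ge0 => /ger0_Im; case: (z) => a b /=. by move/eqP; rewrite oppr_eq0 => /eqP.
  by move: Im0; case: (z) => a b /= ->.
exists (complex.Re z).
apply: (@complexI R).
rewrite rmorph0 -det_map_mx map_mxB /= -/Ac. 
have -> : map_mx (real_complex R) ((complex.Re z)%:M : 'M[R]_n.+1) = z%:M.
  by apply/matrixP => i j; rewrite !mxE {2}zE rmorphMn.
rewrite {1}eAc.
have -> : invmx P *m diag_mx d *m P - z%:M = invmx P *m (diag_mx d - z%:M) *m P.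
  rewrite mulmxBr mulmxBl mul_mx_scalar -scalemxAl mulVmx ?spectral_unit //.
  by rewrite scalemx1.
rewrite !det_mulmx.
have -> : diag_mx d - z%:M = diag_mx (d - const_mx z).
  by apply/matrixP => i j; rewrite !mxE; case: (i == j); rewrite ?mulr1n ?mulr0n ?subr0.
rewrite det_diag (bigD1 ord0) //= !mxE subrr mul0r mulr0 mul0r //.
Qed.

Lemma rv_norm2 n (x : 'rV[R]_n) : (x *m x^T) 0 0 = \sum_j x 0 j ^+ 2.
Proof. by rewrite mxE; apply: eq_bigr => j _; rewrite mxE expr2. Qed.

Lemma rv_norm2_gt0 n (x : 'rV[R]_n) : x != 0 -> 0 < (x *m x^T) 0 0.
Proof.
move=> nx; rewrite rv_norm2 lt_def sumr_ge0 ?andbT; last by move=> j _; exact: sqr_ge0.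
apply: contra nx => /eqP /psumr_eq0P h; apply/eqP/matrixP => i j.
rewrite ord1 mxE; apply/eqP; rewrite -sqrf_eq0; apply/eqP; apply: h => // k _.
exact: sqr_ge0.
Qed.

Lemma rv_dotC n (x y : 'rV[R]_n) : (x *m y^T) 0 0 = (y *m x^T) 0 0.
Proof. by rewrite -[y *m x^T]trmxK trmx_mul trmxK [in RHS]mxE. Qed.

Lemma householder n (u : 'rV[R]_n.+1) : u *m u^T = 1%:M ->
  exists H : 'M[R]_n.+1, [/\ H^T = H, H *m H = 1%:M & delta_mx 0 0 *m H = u].
Proof.
move=> uu.
set e : 'rV[R]_n.+1 := delta_mx 0 0.
have [->|neq] := eqVneq u e.
  by exists 1%:M; rewrite trmx1 !mulmx1.
pose w := e - u.
have ee : e *m e^T = 1%:M.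
  rewrite /e trmx_delta mul_delta_mx; by apply/matrixP => i j; rewrite !ord1 !mxE.
pose a := (e *m u^T) 0 0.
have eu : e *m u^T = a%:M by rewrite [LHS]mx11_scalar.
have ue : u *m e^T = a%:M by rewrite [LHS]mx11_scalar -rv_dotC.
pose q := (w *m w^T) 0 0.
have wE : w *m w^T = q%:M by rewrite [LHS]mx11_scalar.
have qE : q = 2 - 2 * a.
  rewrite /q /w linearB /= mulmxBl !mulmxBr ee eu ue uu !mxE /=; ring.
have q0 : q != 0 by rewrite gt_eqF // rv_norm2_gt0 // subr_eq0 eq_sym.
pose c := 2 / q.
pose W := w^T *m w.
have WW : W *m W = q *: W.
  by rewrite /W mulmxA -[w^T *m w *m w^T]mulmxA wE mul_mx_scalar scalemxAl.
exists (1%:M - c *: W); split.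
- by rewrite linearB /= linearZ /= trmx1 /W trmx_mul trmxK.
- rewrite mulmxBl !mulmxBr mul1mx mulmx1 -!scalemxAl -!scalemxAr WW !scalerA.
  have -> : c * c * q = c + c by rewrite /c; field.
  by rewrite mul1mx scalerDl opprB addrK subrK.
- have ew : e *m w^T = (1 - a)%:M.
    by rewrite /w linearB /= mulmxBr ee eu raddfB.
  rewrite mulmxBr mulmx1 -scalemxAr /W mulmxA ew mul_scalar_mx scalerA.
  have -> : c * (1 - a) = 1 by rewrite /c qE; field; move: q0; rewrite qE.
  by rewrite scale1r /w opprB addrC subrK.
Qed.


Lemma spec_exists n (A : 'M[R]_n) : A^T = A -> exists p, spec_dec A p.
Proof.
elim: n A => [|n IH] A Asym.
  exists (1%:M, 0); split; first by rewrite /Defs.orthogonal trmx1 mulmx1.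
  by apply/matrixP => -[].
have [r hr] := real_eig Asym.
have /det0P [v v0 vA] : \det (A - r%:M) == 0 by rewrite hr.
move: vA; rewrite mulmxBr mul_mx_scalar => /eqP; rewrite subr_eq0 => /eqP vA.
pose s := (v *m v^T) 0 0.
have s0 : 0 < s by exact: rv_norm2_gt0.
pose k := (Num.sqrt s)^-1.
pose u := k *: v.
have uu : u *m u^T = 1%:M.
  rewrite /u linearZ /= -scalemxAl -scalemxAr scalerA [v *m v^T]mx11_scalar -/s.
  rewrite -mul_scalar_mx -scalar_mxM; congr (_%:M).
  rewrite /k -invfM -expr2 sqr_sqrtr ?ltW // mulVf //; exact: lt0r_neq0.
have uA : u *m A = r *: u by rewrite /u -scalemxAl vA !scalerA mulrC.
have [H [Hs HH eH]] := householder uu.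
have [B BE] : exists B, B = H *m A *m H by exists (H *m A *m H).
have Bs : B^T = B by rewrite BE !trmx_mul Hs Asym mulmxA.
have eB : (delta_mx 0 0 : 'rV[R]_n.+1) *m B = r *: delta_mx 0 0.
  by rewrite BE !mulmxA eH uA -scalemxAl -eH -mulmxA HH mulmx1.
have B0k k0 : B 0 k0 = r * (k0 == 0)%:R.
  have := congr1 (fun M : 'rV[R]_n.+1 => M 0 k0) eB.
  by rewrite -rowE !mxE => ->.
pose B' : 'M[R]_(1 + n) := B.
pose A' := drsubmx B'.
have A's : A'^T = A'.
  by apply/matrixP => i j; rewrite !mxE /B' -[in RHS]Bs mxE.
have [[U' v'] [U'o A'E]] := IH A' A's.
simpl in U'o, A'E.
have ur : ursubmx B' = 0.
  apply/matrixP => i j; rewrite !mxE ord1 /B'.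
  have -> : lshift n (0 : 'I_1) = 0 by apply/val_inj.
  rewrite B0k; case: eqP => [/(congr1 val)/=|]; [by rewrite add1n | by rewrite mulr0].
have dl : dlsubmx B' = 0.
  apply/matrixP => i j; rewrite !mxE ord1 /B' -[in LHS]Bs mxE.
  have -> : lshift n (0 : 'I_1) = 0 by apply/val_inj.
  rewrite B0k; case: eqP => [/(congr1 val)/=|]; [by rewrite add1n | by rewrite mulr0].
have ul : ulsubmx B' = r%:M.
  apply/matrixP => i j; rewrite !ord1 !mxE /B'.
  have -> : lshift n (0 : 'I_1) = 0 by apply/val_inj.
  by rewrite B0k eqxx mulr1.
pose D1 : 'M[R]_(1 + n) := block_mx 1%:M 0 0 U'.
exists ((D1 *m H : 'M[R]_(1 + n)), (row_mx r%:M v' : 'rV[R]_(1 + n))); split => /=.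
  rewrite /Defs.orthogonal trmx_mul Hs -mulmxA [H *m (H *m _)]mulmxA HH mul1mx.
  have h : D1 *m D1^T = 1%:M :> 'M[R]_(1 + n).
    rewrite /D1 tr_block_mx mulmx_block !trmx0 !mulmx0 !mul0mx !addr0 !add0r trmx1 mulmx1 U'o.
    by rewrite -scalar_mx_block.
  exact: h.
have DB : D1^T *m diag_mx (row_mx r%:M v') *m D1 = B'.
  rewrite /D1 tr_block_mx diag_mx_row !mulmx_block !trmx0 trmx1 !mulmx0 !mul0mx !addr0 !add0r.
  rewrite !mul1mx !mulmx1 -A'E -[in RHS](submxK B') ul ur dl; congr block_mx; last by rewrite mul0mx.
  by apply/matrixP => i j; rewrite !ord1 !mxE.
have h : (D1 *m H)^T *m diag_mx (row_mx r%:M v') *m (D1 *m H) = A :> 'M[R]_(1 + n).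
  rewrite trmx_mul Hs !mulmxA -(mulmxA H (D1^T)) -(mulmxA H) DB.
  by rewrite /B' BE !mulmxA HH mul1mx -mulmxA HH mulmx1.
exact: (esym h).
Qed.
End Eig.

Section Main.
Variable R : realType.
Variable d : nat.
Implicit Types (A U : 'M[R]_d) (a b : 'rV[R]_d).

Lemma orthTK U : Defs.orthogonal U -> U^T *m U = 1%:M.
Proof. by move=> h; apply: mulmx1C. Qed.

Lemma mfun_spec f A : A^T = A ->
  exists q, spec_dec A q /\ mfun f A = q.1^T *m diag_mx (map_mx f q.2) *m q.1.
Proof.
move=> As; rewrite /mfun; case: pselect => [h|nh].
  by exists (projT1 (cid h)); split => //; exact: (projT2 (cid h)).
by exfalso; apply: nh; exact: spec_exists.
Qed.

Lemma conj_mul U a b : Defs.orthogonal U ->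
  (U^T *m diag_mx a *m U) *m (U^T *m diag_mx b *m U)
  = U^T *m diag_mx (\row_j (a 0 j * b 0 j)) *m U.
Proof.
move=> Uo; rewrite -!mulmxA (mulmxA U) Uo mul1mx.
by rewrite (mulmxA (diag_mx a)) mulmx_diag.
Qed.

Lemma conj_tr U a : (U^T *m diag_mx a *m U)^T = U^T *m diag_mx a *m U.
Proof. by rewrite !trmx_mul trmxK tr_diag_mx mulmxA. Qed.

Lemma det_conj U a : Defs.orthogonal U -> \det (U^T *m diag_mx a *m U) = \prod_i a 0 i.
Proof.
move=> Uo; rewrite !det_mulmx det_diag mulrC mulrA -det_mulmx Uo.
by rewrite det1 mul1r.
Qed.

Lemma one_conj U : Defs.orthogonal U -> 1%:M = U^T *m diag_mx (const_mx 1) *m U.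
Proof.
move=> Uo; have -> : diag_mx (const_mx 1) = 1%:M :> 'M[R]_d.
  by apply/matrixP => i j; rewrite !mxE.
by rewrite mulmx1 orthTK.
Qed.

Lemma conj_lin U a b (s t : R) : Defs.orthogonal U ->
  s *: (U^T *m diag_mx a *m U) + t *: (U^T *m diag_mx b *m U)
  = U^T *m diag_mx (\row_j (s * a 0 j + t * b 0 j)) *m U.
Proof.
move=> Uo.
have h c D : c *: (U^T *m diag_mx D *m U) = U^T *m diag_mx (c *: D) *m U.
  by rewrite linearZ /= -scalemxAr -scalemxAl.
rewrite !h -mulmxDl -mulmxDr -linearD /=; congr (_ *m diag_mx _ *m _).
by apply/matrixP => i j; rewrite !mxE ord1.
Qed.

Lemma sum_sq_tr (X : 'M[R]_d) : \sum_i \sum_j X i j ^+ 2 = \tr (X *m X^T).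
Proof.
rewrite /mxtrace; apply: eq_bigr => i _; rewrite mxE; apply: eq_bigr => j _.
by rewrite [X^T j i]mxE expr2.
Qed.

Lemma frob_conj U a : Defs.orthogonal U ->
  frob (U^T *m diag_mx a *m U) = Num.sqrt (\sum_i a 0 i ^+ 2).
Proof.
move=> Uo; rewrite /frob sum_sq_tr conj_tr conj_mul // mxtrace_mulC mulmxA Uo mul1mx mxtrace_diag.
by congr Num.sqrt; apply: eq_bigr => j _; rewrite mxE expr2.
Qed.

Lemma posdef_pos A q : posdef A -> spec_dec A q -> forall i, 0 < q.2 0 i.
Proof.
case: q => U v [_ Apos] [Uo AE] i /=; rewrite /= in Uo AE.
pose x : 'rV[R]_d := delta_mx 0 i *m U.
have x0 : x != 0.
  apply/eqP => h; have := congr1 (fun M => M *m U^T) h.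
  rewrite mul0mx /x -mulmxA Uo mulmx1 => /matrixP /(_ 0 i); rewrite !mxE !eqxx /=.
  by move/eqP; rewrite oner_eq0.
have := Apos x x0; rewrite AE /x /=.
rewrite trmx_mul !mulmxA -(mulmxA _ U) Uo mulmx1 -(mulmxA _ U) Uo mulmx1.
by rewrite trmx_delta -colE mxE -rowE !mxE eqxx mulr1n.
Qed.

Lemma ln_prod (F : 'I_d -> R) : (forall i, 0 < F i) ->
  0 < \prod_i F i /\ ln (\prod_i F i) = \sum_i ln (F i).
Proof.
move=> Fp; apply: (big_rec2 (fun p s => 0 < p /\ ln p = s)); first by rewrite ln1.
move=> i p s _ [hp <-]; split; first exact: mulr_gt0.
by rewrite lnM ?posrE.
Qed.

End Main.

Theorem mainTheorem5 (R : realType) (d : nat) (Sig : 'M[R]_d) (alpha : R) :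
  posdef Sig -> 0 < alpha ->
  forall C : R, alpha / 8%:R <= C ->
  ballR Sig alpha `<=` ballS Sig (C * alpha).
Proof.
move=> Sp a0 C hC A [Ap hA]; split => //.
rewrite /deltaR in hA.
have As : A^T = A := Ap.1.
have Ss : Sig^T = Sig := Sp.1.
have [[U v] [[Uo AE] msE]] := mfun_spec (@Num.sqrt R) As.
simpl in Uo, AE, msE.
have vp := @posdef_pos R d A (U, v) Ap (conj Uo AE); simpl in vp.
pose Q := msqrt A.
have QE : Q = U^T *m diag_mx (map_mx Num.sqrt v) *m U by [].
have [Bm BmE] : exists Bm, Bm = U^T *m diag_mx (map_mx (fun x => (Num.sqrt x)^-1) v) *m U by eexists.
have QB : Q *m Bm = 1%:M.
  rewrite QE BmE conj_mul // (one_conj Uo); congr (_ *m diag_mx _ *m _).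
  apply/matrixP => i j; rewrite !ord1 !mxE divff //.
  by rewrite gt_eqF // sqrtr_gt0.
have Qu : Q \in unitmx by case: (mulmx1_unit QB).
have Bdef : minvsqrt A = Bm.
  by rewrite /minvsqrt -/Q -[invmx Q]mulmx1 -QB mulmxA mulVmx ?mul1mx.
have BQ : Bm *m Q = 1%:M by apply: mulmx1C.
have QQ : Q *m Q = A.
  rewrite QE conj_mul // AE; congr (_ *m diag_mx _ *m _).
  apply/matrixP => i j; rewrite !ord1 !mxE -expr2 sqr_sqrtr //; exact: ltW.
have Qs : Q^T = Q by rewrite QE conj_tr.
have Bs : Bm^T = Bm by rewrite BmE conj_tr.
have [M MdE] : exists M, M = Bm *m Sig *m Bm by eexists.
have Ms : M^T = M by rewrite MdE !trmx_mul Bs Ss mulmxA.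
have Mpos : posdef M.
  split => // x x0.
  have xB0 : x *m Bm != 0.
    apply: contra x0 => /eqP h; apply/eqP.
    by rewrite -[x]mulmx1 -BQ mulmxA h mul0mx.
  have := Sp.2 _ xB0.
  by rewrite MdE trmx_mul Bs !mulmxA.
have [[V w] [[Vo ME] mlE]] := mfun_spec (@ln R) Ms.
simpl in Vo, ME, mlE.
have wp := @posdef_pos R d M (V, w) Mpos (conj Vo ME); simpl in wp.
rewrite /mlog Bdef -MdE mlE frob_conj // in hA.
set S := \sum_i _ in hA.
have S0 : 0 <= S by apply: sumr_ge0 => i _; exact: sqr_ge0.
have hS : S <= alpha ^+ 2.
  have := ler_pM (sqrtr_ge0 S) (sqrtr_ge0 S) hA hA.
  by rewrite -!expr2 sqr_sqrtr.
have SigE : Sig = Q *m M *m Q.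
  by rewrite MdE !mulmxA QB mul1mx -mulmxA BQ mulmx1.
have AE2 : A = Q *m 1%:M *m Q by rewrite mulmx1 QQ.
have sumE : (2%:R)^-1 *: (A + Sig) = Q *m ((2%:R)^-1 *: (1%:M + M)) *m Q.
  by rewrite {1}AE2 SigE -mulmxDl -mulmxDr scalemxAl scalemxAr.
have halfE : (2%:R)^-1 *: (1%:M + M) =
    V^T *m diag_mx (\row_j ((2%:R)^-1 * 1 + (2%:R)^-1 * w 0 j)) *m V.
  rewrite scalerDr (one_conj Vo) ME conj_lin //; congr (_ *m diag_mx _ *m _); by apply/matrixP => i j; rewrite ord1 !mxE.
have d1 : \det ((2%:R)^-1 *: (A + Sig)) = \det Q * \det Q *
    \prod_j ((2%:R)^-1 * 1 + (2%:R)^-1 * w 0 j).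
  by rewrite sumE det_mulmx det_mulmx halfE det_conj //; rewrite mulrAC; congr (_ * _); apply: eq_bigr => j _; rewrite mxE.
have d2 : \det (A *m Sig) = (\det Q * \det Q) * (\det Q * \det Q) * \prod_j w 0 j.
  rewrite det_mulmx -QQ SigE !det_mulmx ME det_conj //; ring.
have qn0 : \det Q != 0.
  apply/eqP => h; have := congr1 determinant QB.
  by rewrite det_mulmx h mul0r det1 => /eqP; rewrite eq_sym oner_eq0.
have qq : 0 < \det Q * \det Q by rewrite -expr2 exprn_even_gt0.
have [P1p P1E] : 0 < \prod_j ((2%:R)^-1 * 1 + (2%:R)^-1 * w 0 j) /\
    ln (\prod_j ((2%:R)^-1 * 1 + (2%:R)^-1 * w 0 j)) =
    \sum_j ln ((2%:R)^-1 * 1 + (2%:R)^-1 * w 0 j).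
  by apply: ln_prod => j; have := wp j; lra.
have [P2p P2E] : 0 < \prod_j w 0 j /\ ln (\prod_j w 0 j) = \sum_j ln (w 0 j).
  exact: ln_prod.
rewrite /deltaS2 d1 d2; move: qq; move: (\det Q * \det Q) => q qq.
rewrite !lnM ?posrE ?mulr_gt0 // P1E P2E.
have e1 : \sum_j ln ((2%:R)^-1 * 1 + (2%:R)^-1 * w 0 j) = \sum_j ln ((1 + w 0 j) / 2).
  by apply: eq_bigr => j _; congr ln; rewrite mulrDl mulrC [w 0 j / 2]mulrC.
have key : \sum_j (ln ((1 + w 0 j) / 2) - 2^-1 * ln (w 0 j)) <=
    \sum_j 8^-1 * (ln (w 0 j) ^+ 2).
  by apply: ler_sum => j _; exact: key_scalar.
rewrite sumrB -mulr_sumr -mulr_sumr in key.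
have SE : S = \sum_j ln (w 0 j) ^+ 2 by apply: eq_bigr => j _; rewrite mxE.
have h3 : alpha / 8%:R * alpha <= C * alpha by apply: ler_wpM2r => //; exact: ltW.
rewrite e1; lra.
Qed.
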